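(* Let $r,s,t,a,b,c$ be real numbers with $t\neq0$, and let $M_{H,n}^{(3)}$, $M_{h,n}^{(3)}$ be the matrix sequences defined in the context. Then for all nonnegative integers $m,n$: $$M_{h,m}^{(3)}M_{H,n+1}^{(3)}=M_{H,n+1}^{(3)}M_{h,m}^{(3)}=M_{H,m+n+1}^{(3)},\qquad \big(M_{H,n+1}^{(3)}\big)^{m}=\big(M_{H,1}^{(3)}\big)^{m}M_{h,mn}^{(3)}.$$
   Context: The third-order Horadam matrix sequence is the sequence of $3\times3$ matrices defined by $M_{H,n+3}^{(3)}=rM_{H,n+2}^{(3)}+sM_{H,n+1}^{(3)}+tM_{H,n}^{(3)}$ ($n\ge0$) with $M_{H,0}^{(3)}=\begin{pmatrix} b & c-rb & ta\\ a & b-ra & c-rb-sa\\ \frac{1}{t}(c-rb-sa) & a-\frac{r}{t}(c-rb-sa) & \frac1t\big(-sc+(t+rs)b+(s^2-rt)a\big)\end{pmatrix}$, $M_{H,1}^{(3)}=\begin{pmatrix} c & sb+ta & tb\\ b & c-rb & ta\\ a & b-ra & c-rb-sa\end{pmatrix}$, $M_{H,2}^{(3)}=\begin{pmatrix} rc+sb+ta & sc+tb & tc\\ c & sb+ta & tb\\ b & c-rb & ta\end{pmatrix}$. The generalized Tribonacci matrix sequence satisfies the same recurrence with $M_{h,0}^{(3)}=I_3$, $M_{h,1}^{(3)}=\begin{pmatrix} r&s&t\\1&0&0\\0&1&0\end{pmatrix}$, $M_{h,2}^{(3)}=\begin{pmatrix} r^2+s&rs+t&rt\\ r&s&t\\ 1&0&0\end{pmatrix}$.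 *)

(* Defs.v *)
From mathcomp Require Import all_boot all_order all_algebra.
Set Implicit Arguments. Unset Strict Implicit. Unset Printing Implicit Defensive.
Import Order.TTheory GRing.Theory Num.Theory.
Local Open Scope ring_scope.

Section Horadam.
Variable R : realFieldType.

Definition mx3 (a00 a01 a02 a10 a11 a12 a20 a21 a22 : R) : 'M[R]_3 :=
  \matrix_(i < 3, j < 3)
    nth 0 (nth [::] [:: [:: a00; a01; a02]; [:: a10; a11; a12]; [:: a20; a21; a22]] i) j.

Fixpoint rec3_mx (r s t : R) (A0 A1 A2 : 'M[R]_3) (n : nat) : 'M[R]_3 :=
  match n with
  | 0%N => A0
  | 1%N => A1
  | 2%N => A2
  | S ((S ((S k) as k1)) as k2) =>
      r *: rec3_mx r s t A0 A1 A2 k2 + s *: rec3_mx r s t A0 A1 A2 k1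
      + t *: rec3_mx r s t A0 A1 A2 k
  end.

Definition MH0 (r s t a b c : R) : 'M[R]_3 :=
  mx3 b (c - r * b) (t * a)
      a (b - r * a) (c - r * b - s * a)
      (t^-1 * (c - r * b - s * a)) (a - r / t * (c - r * b - s * a))
      (t^-1 * (- s * c + (t + r * s) * b + (s ^+ 2 - r * t) * a)).

Definition MH1 (r s t a b c : R) : 'M[R]_3 :=
  mx3 c (s * b + t * a) (t * b)
      b (c - r * b) (t * a)
      a (b - r * a) (c - r * b - s * a).

Definition MH2 (r s t a b c : R) : 'M[R]_3 :=
  mx3 (r * c + s * b + t * a) (s * c + t * b) (t * c)
      c (s * b + t * a) (t * b)
      b (c - r * b) (t * a).

Definition MH (r s t a b c : R) (n : nat) : 'M[R]_3 :=
  rec3_mx r s t (MH0 r s t a b c) (MH1 r s t a b c) (MH2 r s t a b c) n.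

Definition Mh (r s t : R) (n : nat) : 'M[R]_3 :=
  rec3_mx r s t 1%:M
    (mx3 r s t 1 0 0 0 1 0)
    (mx3 (r ^+ 2 + s) (r * s + t) (r * t) r s t 1 0 0) n.

End Horadam.

(* Main.v *)
Require Import Defs.
From mathcomp Require Import all_boot all_order all_algebra.
From mathcomp Require Import ring.
Import Order.TTheory GRing.Theory Num.Theory.
Local Open Scope ring_scope.

Section S.
Variable R : realFieldType.
Variables r s t a b c : R.
Hypothesis ht : t != 0.

Definition C : 'M[R]_3 := mx3 r s t 1 0 0 0 1 0.

Lemma C3 : C * C * C = r *: (C * C) + s *: C + t%:M.
Proof. rewrite -!mulmxE. apply/matrixP => i j.
 rewrite !mxE !big_ord_recr big_ord0 /= !mxE !big_ord_recr big_ord0 /= !mxE.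
 case: i => [[|[|[|i]]]] //= Hi; case: j => [[|[|[|j]]]] //= Hj; idtac. all: rewrite ?big_ord0 ?mxE /=; ring.
Qed.

Lemma h1 : MH0 r s t a b c * C = MH1 r s t a b c.
Proof. rewrite -!mulmxE. apply/matrixP => i j.
 rewrite !mxE !big_ord_recr big_ord0 /= !mxE.
 case: i => [[|[|[|i]]]] //= Hi; case: j => [[|[|[|j]]]] //= Hj; field; rewrite ?ht //.
Qed.

Lemma h2 : C * MH0 r s t a b c = MH1 r s t a b c.
Proof. rewrite -!mulmxE. apply/matrixP => i j.
 rewrite !mxE !big_ord_recr big_ord0 /= !mxE.
 case: i => [[|[|[|i]]]] //= Hi; case: j => [[|[|[|j]]]] //= Hj; field; rewrite ?ht //.
Qed.

Lemma h3 : MH1 r s t a b c * C = MH2 r s t a b c.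
Proof. rewrite -!mulmxE. apply/matrixP => i j.
 rewrite !mxE !big_ord_recr big_ord0 /= !mxE.
 case: i => [[|[|[|i]]]] //= Hi; case: j => [[|[|[|j]]]] //= Hj; ring.
Qed.

Lemma h4 : C * C = mx3 (r ^+ 2 + s) (r * s + t) (r * t) r s t 1 0 0.
Proof. rewrite -!mulmxE. apply/matrixP => i j.
 rewrite !mxE !big_ord_recr big_ord0 /= !mxE.
 case: i => [[|[|[|i]]]] //= Hi; case: j => [[|[|[|j]]]] //= Hj; ring.
Qed.

Lemma rec3_pow (A0 A1 A2 B X : 'M[R]_3) :
  X * X * X = r *: (X * X) + s *: X + t%:M ->
  A0 = B -> A1 = B * X -> A2 = B * (X * X) ->
  forall n, rec3_mx r s t A0 A1 A2 n = B * X ^+ n.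
Proof.
move=> HX -> -> -> n.
suff H : forall n, [/\ rec3_mx r s t B (B * X) (B * (X * X)) n = B * X ^+ n,
   rec3_mx r s t B (B * X) (B * (X * X)) n.+1 = B * X ^+ n.+1 &
   rec3_mx r s t B (B * X) (B * (X * X)) n.+2 = B * X ^+ n.+2] by case: (H n).
elim=> [|k [H0 H1 H2]].
  by rewrite expr0 mulr1 expr1 expr2.
split=> //.
change (rec3_mx r s t B (B * X) (B * (X * X)) k.+3) with
  (r *: rec3_mx r s t B (B * X) (B * (X * X)) k.+2 + s *: rec3_mx r s t B (B * X) (B * (X * X)) k.+1
      + t *: rec3_mx r s t B (B * X) (B * (X * X)) k).
rewrite H0 H1 H2.
have -> : X ^+ k.+3 = X ^+ k * (X * X * X) by rewrite !exprSr !mulrA.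
rewrite HX -scalemx1 !mulrDr -!scalerAr mulr1 !exprSr !mulrA.
by [].
Qed.
End S.
Arguments C {R}. Arguments C3 {R}. Arguments h1 {R}. Arguments h2 {R}. Arguments h3 {R}. Arguments h4 {R}. Arguments rec3_pow {R}.

Theorem theorem3p3 (R : realFieldType) (r s t a b c : R) (ht : t != 0) :
  forall m n : nat,
    [/\ Mh r s t m *m MH r s t a b c n.+1 = MH r s t a b c n.+1 *m Mh r s t m,
        MH r s t a b c n.+1 *m Mh r s t m = MH r s t a b c (m + n).+1
      & (MH r s t a b c n.+1) ^+ m = (MH r s t a b c 1) ^+ m *m Mh r s t (m * n)].
Proof.
move=> m n.
have HC := C3 r s t.
have Eh : forall k, Mh r s t k = (C r s t) ^+ k.
  move=> k; rewrite /Mh (rec3_pow r s t _ _ _ 1 (C r s t) HC) ?mul1r //.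
  by rewrite h4.
have EH : forall k, MH r s t a b c k = MH0 r s t a b c * (C r s t) ^+ k.
  move=> k; rewrite /MH (rec3_pow r s t _ _ _ (MH0 r s t a b c) (C r s t) HC) //.
    by rewrite h1.
  by rewrite mulrA h1 // h3.
have Hc : GRing.comm (MH0 r s t a b c) (C r s t).
  by rewrite /GRing.comm h1 // h2.
have Hck : forall k, GRing.comm (MH0 r s t a b c) (C r s t ^+ k).
  by move=> k; apply: commrX.
rewrite !mulmxE !Eh !EH; split.
- by rewrite mulrA -(Hck m) -mulrA -exprD addnC exprD mulrA.
- by rewrite -mulrA -exprD addnC addnS.
- rewrite exprMn_comm; last exact: Hck.
  by rewrite expr1 exprMn_comm // -mulrA -exprD -exprM mulnC mulnS.
Qed.
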